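(* Let $\gamma > \sqrt{2}$ and let $I$ be a $\gamma$-stable instance of the Euclidean Steiner tree problem with optimal Steiner tree $\mathrm{OPT}$. If $a_1, a_2$ are distinct terminals and $b$ is a Steiner point such that $a_1 b$ and $a_2 b$ are both edges of $\mathrm{OPT}$, then the angle $\theta = \angle a_1 b a_2$ satisfies $\theta > \pi/2$.
   Context: An instance of the Euclidean Steiner tree problem consists of a finite set $V \subset \mathbb{R}^d$, a set $T \subseteq V$ of terminals, and the complete graph on $V$ with edge weights $w_{uv} = \|u - v\|$. Points of $V \setminus T$ are Steiner points. A Steiner tree is a tree in this complete graph whose vertex set contains all of $T$; its weight is the sum of its edge weights. For $\gamma > 1$, the instance is $\gamma$-stable if it has a minimum-weight Steiner tree $\mathrm{OPT}$ such that for every $w' : V \times V \to \mathbb{R}_{\ge 0}$ with $w_{uv} \le w'_{uv} \le \gamma w_{uv}$ for all $u,v$, every minimum-weight Steiner tree with respect to $w'$ equals $\mathrm{OPT}$ (the $w'$ need not be Euclidean). $\angle a_1 b a_2 \in [0,\pi]$ is the angle at $b$ between the vectors $a_1 - b$ and $a_2 - b$. *)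

(* Defs.v *)
From HB Require Import structures.
From mathcomp Require Import all_boot all_order all_algebra.
From mathcomp Require Import all_classical all_reals all_analysis.
Set Implicit Arguments. Unset Strict Implicit. Unset Printing Implicit Defensive.
Import Order.TTheory GRing.Theory Num.Theory.
Local Open Scope ring_scope.

Definition dotp (R : realType) (d : nat) (x y : 'rV[R]_d) : R :=
  \sum_(i < d) x ord0 i * y ord0 i.
Definition enorm (R : realType) (d : nat) (x : 'rV[R]_d) : R :=
  Num.sqrt (dotp x x).

Definition angle (R : realType) (d : nat) (a1 b a2 : 'rV[R]_d) : R :=
  acos (dotp (a1 - b) (a2 - b) / (enorm (a1 - b) * enorm (a2 - b))).

(* An instance: vertices indexed by a finite type T, placed at points p v
   in R^d (p injective, so V = image of p is a finite point set), with
   terminal set Tm. *)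
Definition eweight (R : realType) (d : nat) (T : finType) (p : T -> 'rV[R]_d)
  (u v : T) : R := enorm (p u - p v).

(* A tree in the complete graph on T: vertex set S (nonempty) and edge set E
   of unordered pairs {u,v} (u <> v) inside S, connected on S, with
   #|E| = #|S| - 1 (connected with |E| = |S| - 1 <=> tree). *)
Definition edge_rel (T : finType) (E : {set {set T}}) : rel T :=
  fun u v => [set u; v] \in E.

Definition is_tree (T : finType) (S : {set T}) (E : {set {set T}}) : Prop :=
  [/\ S != finset.set0,
      (forall e, e \in E -> exists u v, [/\ u != v, u \in S, v \in S & e = [set u; v]]),
      (forall u v, u \in S -> v \in S -> connect (edge_rel E) u v)
    & #|E| = (#|S| - 1)%N].

Definition steiner_tree (T : finType) (Tm : {set T})
  (S : {set T}) (E : {set {set T}}) : Prop :=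
  is_tree S E /\ Tm \subset S.

(* Weight of an edge set w.r.t. a symmetric weight function w':
   each unordered edge {u,v} is counted via both ordered pairs, hence 1/2. *)
Definition tree_weight (R : realType) (T : finType) (w' : T -> T -> R)
  (E : {set {set T}}) : R :=
  2^-1 * \sum_(u : T) \sum_(v : T | [set u; v] \in E) w' u v.

Definition min_steiner_tree (R : realType) (T : finType) (Tm : {set T})
  (w' : T -> T -> R) (S : {set T}) (E : {set {set T}}) : Prop :=
  steiner_tree Tm S E /\
  forall S' E', steiner_tree Tm S' E' -> tree_weight w' E <= tree_weight w' E'.

Definition stable_with (R : realType) (d : nat) (T : finType)
  (p : T -> 'rV[R]_d) (Tm : {set T}) (gamma : R)
  (S : {set T}) (E : {set {set T}}) : Prop :=
  min_steiner_tree Tm (eweight p) S E /\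
  forall w' : T -> T -> R,
    (forall u v, w' u v = w' v u) ->
    (forall u v, eweight p u v <= w' u v <= gamma * eweight p u v) ->
    forall S' E', min_steiner_tree Tm w' S' E' -> S' = S /\ E' = E.

Definition gamma_stable (R : realType) (d : nat) (T : finType)
  (p : T -> 'rV[R]_d) (Tm : {set T}) (gamma : R) : Prop :=
  exists S E, stable_with p Tm gamma S E.

(* Main.v *)
Require Import Defs.
From HB Require Import structures.
From mathcomp Require Import all_boot all_order all_algebra.
From mathcomp Require Import all_classical all_reals all_analysis.
From mathcomp Require Import ring lra zify.
Import Order.TTheory GRing.Theory Num.Theory.
Local Open Scope ring_scope.
Set Implicit Arguments.
Lemma set2_eq (T : finType) (a b c d : T) :
  [set a; b] = [set c; d] -> (a = c /\ b = d) \/ (a = d /\ b = c).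
Proof.
move=> H.
have ha : a \in [set c; d] by rewrite -H set21.
have hb : b \in [set c; d] by rewrite -H set22.
have hc : c \in [set a; b] by rewrite H set21.
have hd : d \in [set a; b] by rewrite H set22.
move: ha hb hc hd; rewrite !inE.
by case/orP=>/eqP->; case/orP=>/eqP->; case/orP=>/eqP ?; case/orP=>/eqP ?; subst; auto.
Qed.

Lemma set2_eqb (T : finType) (a b c d : T) :
  ([set a; b] == [set c; d]) = ((a == c) && (b == d)) || ((a == d) && (b == c)).
Proof.
apply/eqP/orP.
  by case/set2_eq => [[-> ->]|[-> ->]]; [left|right]; rewrite !eqxx.
by case=> /andP[/eqP-> /eqP->] //; rewrite finset.setUC.
Qed.

Lemma sum_pick (R : realType) (T : finType) (c : T) (G : T -> R) :
  \sum_(u : T) (if u == c then G u else 0) = G c.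
Proof. by rewrite -big_mkcond /= big_pred1_eq. Qed.

Lemma sum_pair (R : realType) (T : finType) (c d : T) (f : T -> T -> R) :
  c != d -> (forall u v, f u v = f v u) ->
  \sum_(u : T) \sum_(v : T) (if [set u; v] == [set c; d] then f u v else 0)
  = 2 * f c d.
Proof.
move=> cd fs.
transitivity (\sum_(u : T) ((if u == c then (\sum_(v : T) if v == d then f u v else 0) else 0)
   + (if u == d then (\sum_(v : T) if v == c then f u v else 0) else 0))).
  apply: eq_bigr => u _.
  case Huc: (u == c); case Hud: (u == d).
  - by move/eqP: Huc => Huc; move/eqP: Hud => Hud; subst; rewrite eqxx in cd.
  - rewrite addr0; apply: eq_bigr => v _; rewrite set2_eqb Huc Hud /= orbF; by case: (v == d).
  - rewrite add0r; apply: eq_bigr => v _; rewrite set2_eqb Huc Hud /=; by case: (v == c).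
  - rewrite addr0; apply: big1 => v _; by rewrite set2_eqb Huc Hud.
rewrite big_split /= -!big_mkcond /= !big_pred1_eq -!big_mkcond /= !big_pred1_eq (fs d c); lra.
Qed.

Lemma weight_swap (R : realType) (T : finType) (E : {set {set T}}) (c d c' d' : T)
  (f : T -> T -> R) :
  c != d -> c' != d' -> (forall u v, f u v = f v u) ->
  [set c; d] \in E -> [set c'; d'] \notin E ->
  tree_weight f ((E :\ [set c; d]) :|: [set [set c'; d']]) =
  tree_weight f E - f c d + f c' d'.
Proof.
move=> cd cd' fs xE yE.
rewrite /tree_weight.
transitivity (2^-1 * (\sum_(u : T) \sum_(v : T) (if [set u; v] \in E then f u v else 0)
  - \sum_(u : T) \sum_(v : T) (if [set u; v] == [set c; d] then f u v else 0)
  + \sum_(u : T) \sum_(v : T) (if [set u; v] == [set c'; d'] then f u v else 0))).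
  congr (_ * _); rewrite -sumrB -big_split; apply: eq_bigr => u _.
  rewrite big_mkcond -sumrB -big_split; apply: eq_bigr => v _ /=.
  rewrite !inE.
  case H1: ([set u; v] == [set c; d]).
    move/eqP: H1 => H1; rewrite H1 xE /= subrr add0r.
    case H2: ([set c; d] == [set c'; d']) => //.
  rewrite /=.
  case H2: ([set u; v] == [set c'; d']).
    by move/eqP: H2 => ->; rewrite (negbTE yE) /= subr0 add0r.
  by rewrite /= orbF subr0 addr0.
rewrite big_mkcond /=.
have -> : \sum_(u : T) \sum_(v : T | [set u; v] \in E) f u v =
   \sum_(u : T) \sum_(v : T) (if [set u; v] \in E then f u v else 0).
  by apply: eq_bigr => u _; rewrite big_mkcond.
rewrite !sum_pair //; lra.
Qed.
Lemma exists_min (R : realType) (X : finType) (P : X -> Prop) (f : X -> R) x0 :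
  P x0 -> exists x, P x /\ forall y, P y -> f x <= f y.
Proof.
move=> P0.
have P0' : `[< P x0 >] by apply/asboolP.
case: (@arg_minP _ _ _ x0 (fun x => `[< P x >]) f P0') => x /asboolP Px H.
by exists x; split => // y Py; apply: H; apply/asboolP.
Qed.

Section Dist.
Variables (T : finType) (e : rel T) (r : T).

Definition Pd (v : T) (n : nat) : bool :=
  ~~ connect e r v || [exists t : n.-tuple T, path e r t && (last r t == v)].

Lemma Pd_ex v : exists n, Pd v n.
Proof.
case C: (connect e r v); last by exists 0%N; rewrite /Pd C.
move/connectP: C => [p pp lp].
exists (size p); apply/orP; right; apply/existsP; exists (in_tuple p).
by rewrite /= pp lp eqxx.
Qed.

Definition dist v := ex_minn (Pd_ex v).

Lemma dist_spec v : connect e r v ->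
  (exists t : (dist v).-tuple T, path e r t && (last r t == v)) /\
  (forall n (t : n.-tuple T), path e r t -> last r t = v -> (dist v <= n)%N).
Proof.
move=> C; rewrite /dist; case: ex_minnP => m Pm Hm; split.
  by move: Pm; rewrite /Pd C /= => /existsP.
move=> n t pt lt; apply: Hm; apply/orP; right; apply/existsP; exists t.
by rewrite pt lt eqxx.
Qed.

Lemma parent_ex v : connect e r v -> v != r ->
  exists u, [/\ e u v, connect e r u & (dist u < dist v)%N].
Proof.
move=> C vr; have [[t /andP[pt /eqP lt]] _] := @dist_spec v C.
move: pt lt; case: t => s /= /eqP sz.
case/lastP: s sz => [|s' x] sz.
  by move=> _ /= lr; rewrite lr eqxx in vr.
rewrite rcons_path last_rcons => /andP[ps ex] xv; subst x.
exists (last r s'); split => //.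
  by apply/connectP; exists s'.
have Cu : connect e r (last r s') by apply/connectP; exists s'.
have [_ H] := @dist_spec _ Cu.
have := H _ (in_tuple s') ps erefl.
by rewrite size_rcons in sz; rewrite -sz.
Qed.

End Dist.
Arguments dist {T} e r v.
Arguments parent_ex {T e r v}.

Lemma conn_card (T : finType) (S : {set T}) (F : {set {set T}}) r :
  r \in S -> (forall v, v \in S -> connect (edge_rel F) r v) ->
  (#|S| <= #|F| + 1)%N.
Proof.
move=> rS Con.
pose e := edge_rel F.
pose par v := odflt r [pick u | e u v && (dist e r u < dist e r v)%N].
have parP : forall v, v \in S -> v != r ->
   e (par v) v /\ (dist e r (par v) < dist e r v)%N.
  move=> v vS vr; rewrite /par; case: pickP => [u /andP[]|] //=.
  have [u [h1 _ h2]] := parent_ex (Con v vS) vr.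
  move=> /(_ u) /=. rewrite /e h1 h2. done.
pose pe v := [set v; par v].
have inj : {in S :\ r &, injective pe}.
  move=> v v'; rewrite !inE => /andP[vr vS] /andP[v'r v'S] /set2_eq.
  have [_ h1] := parP v vS vr; have [_ h2] := parP v' v'S v'r.
  case=> [[]//|[E1 E2]].
  rewrite E2 in h1; rewrite -E1 in h2; by have := ltn_trans h1 h2; rewrite ltnn.
have sub : pe @: (S :\ r) \subset F.
  apply/fintype.subsetP => x /imsetP[v]; rewrite !inE => /andP[vr vS] ->.
  have [h _] := parP v vS vr; move: h; rewrite /e /edge_rel /pe.
  by rewrite finset.setUC.
have := subset_leq_card sub; rewrite card_in_imset //.
by rewrite (cardsD1 r S) rS add1n addn1 => /= h; rewrite ltnS.
Qed.
Section Geo.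
Variables (R : realType) (d : nat).
Implicit Types x y : 'rV[R]_d.

Lemma dotp_ge0 x : 0 <= dotp x x.
Proof. by apply: sumr_ge0 => i _; rewrite -expr2 sqr_ge0. Qed.

Lemma dotpC x y : dotp x y = dotp y x.
Proof. by apply: eq_bigr => i _; rewrite mulrC. Qed.

Lemma dotp_eq0 x : dotp x x = 0 -> x = 0.
Proof.
move=> /eqP; rewrite psumr_eq0; last by move=> i _; rewrite -expr2 sqr_ge0.
move=> /allP H; apply/rowP => j; rewrite mxE.
have := H j (mem_index_enum j); rewrite /= mulf_eq0 orbb => /eqP ->.
by [] || (rewrite (ord1 i); done).
Qed.

Lemma enorm_sq x : enorm x ^+ 2 = dotp x x.
Proof. by rewrite /enorm sqr_sqrtr // dotp_ge0. Qed.

Lemma enorm_ge0 x : 0 <= enorm x.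
Proof. exact: sqrtr_ge0. Qed.

Lemma enorm_gt0 x : x != 0 -> 0 < enorm x.
Proof.
move=> x0; rewrite /enorm sqrtr_gt0 lt_def dotp_ge0 andbT.
by apply/eqP => /dotp_eq0 h; rewrite h eqxx in x0.
Qed.

Lemma dotp_lin a b x y :
  dotp (a *: x + b *: y) (a *: x + b *: y) =
  a ^+ 2 * dotp x x + b ^+ 2 * dotp y y + 2 * a * b * dotp x y.
Proof.
rewrite /dotp !mulr_sumr -!big_split /=; apply: eq_bigr => i _.
rewrite !mxE; ring.
Qed.

Lemma dotp_sub x y : dotp (x - y) (x - y) = dotp x x + dotp y y - 2 * dotp x y.
Proof.
have -> : x - y = 1 *: x + (-1) *: y by rewrite scale1r scaleN1r.
rewrite dotp_lin; ring.
Qed.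

Lemma cs_lower x y : 0 < enorm x -> 0 < enorm y ->
  - (enorm x * enorm y) <= dotp x y.
Proof.
move=> hx hy.
have := dotp_ge0 (enorm y *: x + enorm x *: y).
rewrite dotp_lin -!enorm_sq => h.
have hp : 0 < enorm x * enorm y by rewrite mulr_gt0.
nra.
Qed.

Lemma angle_le x y : 0 < enorm x -> 0 < enorm y ->
  acos (dotp x y / (enorm x * enorm y)) <= pi / 2 -> 0 <= dotp x y.
Proof.
move=> hx hy ha.
have hp : 0 < enorm x * enorm y by rewrite mulr_gt0.
set c := dotp x y / (enorm x * enorm y) in ha.
suff : 0 <= c by rewrite /c pmulr_lge0 // invr_gt0.
have c1 : -1 <= c.
  rewrite /c ler_pdivlMr // mulN1r; exact: cs_lower.
case: (lerP c 1) => c2; last by apply: le_trans (ltW c2); lra.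
have [/andP[a0 api] cc] := @acos_def _ c (introT andP (conj c1 c2)).
rewrite -cc; apply: cos_ge0_pihalf; rewrite ha andbT.
by apply: le_trans a0; rewrite oppr_le0 divr_ge0 // ?pi_ge0.
Qed.

Lemma geo_bound x y : 0 <= dotp x y -> enorm x <= enorm y ->
  enorm (x - y) <= Num.sqrt 2 * enorm y.
Proof.
move=> dxy nxy.
rewrite /enorm -sqrtrM // ler_wsqrtr // dotp_sub.
have : dotp x x <= dotp y y.
  by rewrite -!enorm_sq; apply: lerXn2r; rewrite ?nnegrE ?enorm_ge0.
lra.
Qed.

End Geo.

Lemma arith_aux (n1 n2 n3 : nat) : n1 = n2.+1 -> n1 = (n3 - 1)%N -> (0 < n3)%N -> (n3 <= n2 + 1)%N -> False.
Proof. lia. Qed.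

Lemma conn_mono (T : finType) (E F : {set {set T}}) (a1 a2 b : T) u v :
  a2 != b -> [set a1; a2] \in F -> [set a1; b] \in F ->
  (forall e, e \in E -> e != [set a2; b] -> e \in F) ->
  connect (edge_rel E) u v -> connect (edge_rel F) u v.
Proof.
move=> a2b h12 h1b hEF; apply: connect_sub => x y; rewrite /edge_rel => h.
case: (eqVneq [set x; y] [set a2; b]) => [/set2_eq [[-> ->]|[-> ->]] | ne].
- apply: (connect_trans (y := a1)); apply: connect1; rewrite /edge_rel //.
  by rewrite finset.setUC.
- apply: (connect_trans (y := a1)); apply: connect1; rewrite /edge_rel //.
  by rewrite finset.setUC.
- by apply: connect1; rewrite /edge_rel; apply: hEF.
Qed.

Lemma enormN (R : realType) (d : nat) (x : 'rV[R]_d) : enorm (- x) = enorm x.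
Proof. by rewrite /enorm /dotp; congr Num.sqrt; apply: eq_bigr => i _; rewrite !mxE mulrNN. Qed.

Lemma eweightC (R : realType) (d : nat) (T : finType) (p : T -> 'rV[R]_d) u v :
  eweight p u v = eweight p v u.
Proof. by rewrite /eweight -enormN opprB. Qed.

Lemma core (R : realType) (d : nat) (T : finType)
  (p : T -> 'rV[R]_d) (Tm : {set T}) (gamma : R)
  (S : {set T}) (E : {set {set T}}) (a1 a2 b : T) :
  1 <= gamma -> stable_with p Tm gamma S E ->
  a1 \in Tm -> a2 \in Tm -> a1 != a2 -> b \notin Tm ->
  [set a1; b] \in E -> [set a2; b] \in E ->
  eweight p a1 a2 < gamma * eweight p a2 b -> False.
Proof.
move=> g1 [[tE _] Stab] a1T a2T a12 bT e1 e2 hw.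
move: (tE) => [[S0 Eok Con Card] TmS].
have a1S : a1 \in S by apply: (fintype.subsetP TmS).
have a1b : a1 != b by apply/eqP => h; rewrite -h a1T in bT.
have a2b : a2 != b by apply/eqP => h; rewrite -h a2T in bT.
have n12 : [set a1; a2] != [set a2; b].
  by rewrite set2_eqb (negbTE a12) (negbTE a1b).
have n1b : [set a1; b] != [set a2; b].
  by rewrite set2_eqb (negbTE a12) (negbTE a1b).
have nt : [set a1; a2] \notin E.
  apply/negP => h.
  set F := E :\ [set a2; b].
  have cF : forall v, v \in S -> connect (edge_rel F) a1 v.
    move=> v vS; apply: (@conn_mono _ E F a1 a2 b) (Con a1 v a1S vS) => //.
    - by rewrite !inE n12 h.
    - by rewrite !inE n1b e1.
    - by move=> e eE ne; rewrite !inE ne eE.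
  have := @conn_card T S F a1 a1S cF.
  have h1 := cardsD1 [set a2; b] E; rewrite e2 /= add1n in h1.
  have h0 : (0 < #|S|)%N by apply/card_gt0P; exists a1.
  rewrite /F; move: h1 Card h0; exact: arith_aux.
set E' := (E :\ [set a2; b]) :|: [set [set a1; a2]].
have tE' : steiner_tree Tm S E'.
  split => //; split => //.
  - move=> e; rewrite !inE => /orP[/andP[_ /Eok]//|/eqP->].
    exists a1, a2; split => //; exact: (fintype.subsetP TmS).
  - move=> u v uS vS; apply: (@conn_mono _ E E' a1 a2 b) (Con u v uS vS) => //.
    - by rewrite !inE eqxx orbT.
    - by rewrite !inE n1b e1.
    - by move=> e eE ne; rewrite !inE ne eE.
  - rewrite /E' finset.setUC cardsU1 !inE (negbTE nt) andbF /=.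
    have h1 := cardsD1 [set a2; b] E; rewrite e2 /= add1n in h1.
    by rewrite add1n -h1.
pose w' u v := if [set u; v] \in E then gamma * eweight p u v else eweight p u v.
have ws : forall u v, w' u v = w' v u.
  by move=> u v; rewrite /w' finset.setUC eweightC.
have wb : forall u v, eweight p u v <= w' u v <= gamma * eweight p u v.
  move=> u v; have e0 : 0 <= eweight p u v by exact: sqrtr_ge0.
  rewrite /w'; case: ifP => _; apply/andP; split => //; nra.
have [[S0' E0] [tE0 min0]] :=
  @exists_min R _ (fun x => steiner_tree Tm x.1 x.2) (fun x => tree_weight w' x.2) (S, E) tE.
have [eS eE] := Stab w' ws wb S0' E0 (conj tE0 (fun S' E' h => min0 (S', E') h)).
subst S0' E0.
have := min0 (S, E') tE'; rewrite /= /E' weight_swap //.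
rewrite /w' e2 (negbTE nt).
lra.
Qed.

Unset Implicit Arguments.

Theorem mainTheorem11 (R : realType) (d : nat) (T : finType)
  (p : T -> 'rV[R]_d) (Tm : {set T}) (gamma : R)
  (S : {set T}) (E : {set {set T}}) :
  injective p ->
  Num.sqrt 2 < gamma ->
  stable_with p Tm gamma S E ->
  forall a1 a2 b : T,
    a1 \in Tm -> a2 \in Tm -> a1 != a2 -> b \notin Tm ->
    [set a1; b] \in E -> [set a2; b] \in E ->
    pi / 2 < angle (p a1) (p b) (p a2).
Proof.
move=> pinj hg st a1 a2 b a1T a2T a12 bT e1 e2.
have s1 : 1 <= Num.sqrt (2 : R) by rewrite -{1}sqrtr1 ler_wsqrtr //; lra.
have g1 : 1 <= gamma by apply: le_trans (ltW hg).
have a1b : a1 != b by apply/eqP => h; rewrite -h a1T in bT.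
have a2b : a2 != b by apply/eqP => h; rewrite -h a2T in bT.
set x := p a1 - p b; set y := p a2 - p b.
have nz : forall u v, u != v -> p u - p v != 0.
  move=> u v uv; rewrite subr_eq0; apply: contra uv => /eqP /pinj ->; done.
have hx : 0 < enorm x by apply: enorm_gt0; exact: nz.
have hy : 0 < enorm y by apply: enorm_gt0; exact: nz.
rewrite ltNge; apply/negP => ha.
have dxy : 0 <= dotp x y by apply: angle_le hx hy ha.
have exy : x - y = p a1 - p a2 by rewrite /x /y opprB addrA subrK.
have eyx : y - x = p a2 - p a1 by rewrite /x /y opprB addrA subrK.
case: (lerP (enorm x) (enorm y)) => nxy.
  have := @geo_bound R d x y dxy nxy; rewrite exy => hb.
  apply: (core g1 st a1T a2T a12 bT e1 e2).
  rewrite /eweight -/y; apply: le_lt_trans hb _.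
  by rewrite ltr_pM2r.
have := @geo_bound R d y x; rewrite dotpC => /(_ dxy (ltW nxy)).
rewrite eyx => hb.
have a21 : a2 != a1 by rewrite eq_sym.
apply: (core g1 st a2T a1T a21 bT e2 e1).
rewrite /eweight -/x; apply: le_lt_trans hb _.
by rewrite ltr_pM2r.
Qed.
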